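(* Let $q,K,L,T$ be positive integers and let $\boldsymbol{\alpha}^{(p)}\in\mathbb{Z}_q^K$, $\boldsymbol{\beta}^{(p)}\in\mathbb{Z}_q^L$ be arbitrary. Suppose $\boldsymbol{\alpha}^{(s)}=(b_\alpha+jx_\alpha)_{j=0}^{T-1}\bmod q$ and $\boldsymbol{\beta}^{(s)}=(b_\beta+jx_\beta)_{j=0}^{T-1}\bmod q$ are arithmetic progressions in $\mathbb{Z}_q$ whose common differences $x_\alpha,x_\beta$ are coprime to $q$. Let $N=|\mathcal{TL}\cup\mathcal{TR}\cup\mathcal{BL}\cup\mathcal{BR}|$. Then for every prime $p$ with $q\mid p-1$ there exist $N$ $q$-th roots of unity $\boldsymbol\rho=(\rho_1,\dots,\rho_N)$ in $\mathbb{F}_p$ such that (a) $\mathbf V(\boldsymbol\rho,\boldsymbol\gamma)$ is invertible and (b) all $T\times T$ submatrices of $\mathbf V(\boldsymbol\rho,\boldsymbol{\alpha}^{(s)})$ and of $\mathbf V(\boldsymbol\rho,\boldsymbol{\beta}^{(s)})$ are invertible.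
   Context: $\mathbb{Z}_q$ denotes the integers mod $q$. For a vector $\mathbf v$, $\{\mathbf v\}$ is the set of its entries; sumsets are $\mathcal A+\mathcal B=\{a+b:a\in\mathcal A,b\in\mathcal B\}$ with addition in $\mathbb{Z}_q$. $\mathcal{TL}=\{\boldsymbol{\alpha}^{(p)}\}+\{\boldsymbol{\beta}^{(p)}\}$, $\mathcal{TR}=\{\boldsymbol{\alpha}^{(p)}\}+\{\boldsymbol{\beta}^{(s)}\}$, $\mathcal{BL}=\{\boldsymbol{\alpha}^{(s)}\}+\{\boldsymbol{\beta}^{(p)}\}$, $\mathcal{BR}=\{\boldsymbol{\alpha}^{(s)}\}+\{\boldsymbol{\beta}^{(s)}\}$, and $\boldsymbol\gamma$ lists the elements of $\mathcal{TL}\cup\mathcal{TR}\cup\mathcal{BL}\cup\mathcal{BR}$ in ascending order (identifying $\mathbb{Z}_q$ with $\{0,\dots,q-1\}$). For a vector $\boldsymbol\rho$ of length $n$ of $q$-th roots of unity and $\boldsymbol\delta\in\mathbb{Z}_q^m$, $\mathbf V(\boldsymbol\rho,\boldsymbol\delta)$ is the $n\times m$ matrix with $(i,j)$ entry $\rho_i^{\delta_j}$ (well defined since $\rho_i^q=1$). *)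

(* Defs.v *)
From HB Require Import structures.
From mathcomp Require Import all_boot all_order all_algebra.
Set Implicit Arguments. Unset Strict Implicit. Unset Printing Implicit Defensive.
Import GRing.Theory.
Local Open Scope ring_scope.

(* Z_q is represented by the natural numbers 0..q-1; sums are taken mod q. *)

Definition entries n (v : 'I_n -> nat) : seq nat := [seq v i | i <- enum 'I_n].

Definition sumset (q : nat) (A B : seq nat) (c : nat) : bool :=
  has (fun a => has (fun b => ((a + b) %% q)%N == c) B) A.

Definition arith_prog (q T b x : nat) : 'I_T -> nat := fun j => ((b + j * x) %% q)%N.
Arguments arith_prog : clear implicits.

(* gamma: the elements of TL ∪ TR ∪ BL ∪ BR in ascending order *)
Definition gamma_seq (q : nat) (ap bp as_ bs : seq nat) : seq nat :=
  [seq c <- iota 0 q | [|| sumset q ap bp c, sumset q ap bs c,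
                           sumset q as_ bp c | sumset q as_ bs c]].

Definition Vmx (F : nzRingType) n m (rho : 'I_n -> F) (delta : 'I_m -> nat)
  : 'M[F]_(n, m) := \matrix_(i < n, j < m) rho i ^+ delta j.

Definition all_TxT_invertible (F : comUnitRingType) n T (A : 'M[F]_(n, T)) : Prop :=
  forall f : 'I_T -> 'I_n, (forall i j : 'I_T, (i < j)%N -> (f i < f j)%N) ->
    rowsub f A \in unitmx.

(* Main.v *)
Require Import Defs.
From HB Require Import structures.
From mathcomp Require Import all_boot all_order all_algebra.
From mathcomp Require Import cyclic finfield.
Import GRing.Theory.
Local Open Scope ring_scope.

Lemma vand_unit (F : fieldType) n (c a : 'I_n -> F) :
  (forall i, c i != 0) -> (forall i j : 'I_n, (i < j)%N -> a i != a j) ->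
  \matrix_(i, j) (c i * a i ^+ j) \in unitmx.
Proof.
move=> hc ha.
have ->: \matrix_(i, j) (c i * a i ^+ j)
   = diag_mx (\row_i c i) *m (Vandermonde n (\row_i a i))^T.
  by apply/matrixP => i j; rewrite mul_diag_mx !mxE.
rewrite unitmxE det_mulmx det_diag det_tr det_Vandermonde unitfE mulf_neq0 //.
  by apply/prodf_neq0 => i _; rewrite mxE.
apply/prodf_neq0 => i _; apply/prodf_neq0 => j ij; rewrite !mxE subr_eq0 eq_sym.
exact: ha.
Qed.

Lemma prim_Fp (p q : nat) : prime p -> (q %| p.-1)%N -> (0 < q)%N ->
  exists w : 'F_p, q.-primitive_root w.
Proof.
move=> pp qd q0.
have: has (p.-1).-primitive_root (enum (predC1 (0 : 'F_p))).
  apply: has_prim_root.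
  - by rewrite -ltnS prednK ?prime_gt1 ?prime_gt0.
  - apply/allP => x; rewrite mem_enum /= => nz; apply/unity_rootP.
    have e : #|'F_p| = (p.-1).+1 by rewrite card_Fp // prednK ?prime_gt0.
    have := expf_card x; rewrite [#|_|]e exprS.
    by move=> h; apply: (mulfI nz); rewrite mulr1.
  - exact: enum_uniq.
  - by rewrite -cardE cardC1 card_Fp.
case/hasP => z _ pz; exists (z ^+ (p.-1 %/ q)); exact: dvdn_prim_root.
Qed.

Theorem lemma1 (q K L T : nat) (alphap : 'I_K -> 'I_q) (betap : 'I_L -> 'I_q)
  (ba xa bb xb : nat) :
  (0 < q)%N -> (0 < K)%N -> (0 < L)%N -> (0 < T)%N ->
  coprime xa q -> coprime xb q ->
  let AP := entries (fun i => val (alphap i)) in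
  let BP := entries (fun i => val (betap i)) in
  let alphas := arith_prog q T ba xa in
  let betas := arith_prog q T bb xb in
  let gam := gamma_seq q AP BP (entries alphas) (entries betas) in
  let N := size gam in
  forall p : nat, prime p -> (q %| p.-1)%N ->
  exists rho : 'I_N -> 'F_p,
    (forall i, rho i ^+ q = 1) /\
    Vmx rho (fun j : 'I_N => nth 0%N gam j) \in unitmx /\
    all_TxT_invertible (Vmx rho alphas) /\
    all_TxT_invertible (Vmx rho betas).
Proof.
move=> q0 _ _ _ ca cb AP BP alphas betas gam N p pp qd.
have [w pw] := @prim_Fp p q pp qd q0.
have wq : w ^+ q = 1 by apply: prim_expr_order.
have Nq : (N <= q)%N.
  by rewrite /N /gam /gamma_seq size_filter (leq_trans (count_size _ _)) ?size_iota.
exists (fun i => w ^+ i); split.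
  by move=> i; rewrite -exprM mulnC exprM wq expr1n.
have progP (b x : nat) : coprime x q ->
    all_TxT_invertible (Vmx (fun i : 'I_N => w ^+ i) (arith_prog q T b x)).
  move=> cx f fmono; rewrite coprime_sym in cx.
  have ->: rowsub f (Vmx (fun i : 'I_N => w ^+ i) (arith_prog q T b x))
      = \matrix_(i, j) (w ^+ (f i * b) * (w ^+ (f i * x)) ^+ j).
    apply/matrixP => i j; rewrite !mxE /arith_prog.
    rewrite -!exprM -exprD.
    apply/eqP; rewrite (eq_prim_root_expr pw) modnMmr; apply/eqP; congr (_ %% q)%N.
    by rewrite mulnDr -mulnA [(j * x)%N]mulnC.
  apply: vand_unit.
    by move=> i; rewrite expf_neq0 // (prim_root_eq0 pw) -lt0n.
  move=> i j ij; rewrite (eq_prim_root_expr pw) eq_sym.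
  have fij := fmono _ _ ij.
  rewrite eqn_mod_dvd ?leq_mul2r ?(ltnW fij) ?orbT // -mulnBl Gauss_dvdl //.
  apply/negP => hd; have hq : (q <= f j - f i)%N by apply: dvdn_leq; rewrite ?subn_gt0.
  have := leq_ltn_trans (leq_subr (f i) (f j)) (leq_trans (ltn_ord (f j)) Nq).
  by rewrite ltnNge hq.
split; last by split; apply: progP.
have gq : forall j : 'I_N, (nth 0%N gam j < q)%N.
  move=> j; have : nth 0%N gam j \in gam by apply: mem_nth.
  by rewrite /gam /gamma_seq mem_filter mem_iota add0n => /andP[_].
have ugam : uniq gam by rewrite /gam /gamma_seq filter_uniq ?iota_uniq.
have ->: Vmx (fun i : 'I_N => w ^+ i) (fun j : 'I_N => nth 0%N gam j)
    = (\matrix_(i, j) (1 * (w ^+ (nth 0%N gam i)) ^+ j))^T.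
  by apply/matrixP => i j; rewrite !mxE mul1r -!exprM mulnC.
rewrite unitmx_tr; apply: vand_unit => [i|i j ij]; first exact: oner_neq0.
rewrite (eq_prim_root_expr pw) !modn_small ?gq //.
rewrite nth_uniq // ?(ltn_eqF ij) //.
Qed.
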